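(* $FUG\equiv_c FLO$.
   Context: Conventions: every structure is for a finite relational language and has universe a subset of $\omega$; a class of structures is a collection of structures for one fixed finite relational language closed under isomorphism. $D(\mathcal{A})$ is the atomic diagram of $\mathcal{A}$. A computable transformation from $K$ to $K'$ is a c.e. set $\Phi$ of pairs $(\alpha,\varphi)$, $\alpha$ a finite subset of the atomic diagram of a finite structure in the language of $K$, $\varphi$ an atomic sentence or negation of one in the language of $K'$, such that for every $\mathcal{A}\in K$, $\{\varphi:(\exists\alpha\subseteq D(\mathcal{A}))(\alpha,\varphi)\in\Phi\}=D(\mathcal{B})$ for some $\mathcal{B}\in K'$, written $\Phi(\mathcal{A})=\mathcal{B}$. A computable embedding is a computable transformation with $\mathcal{A}\cong\mathcal{A}'\iff\Phi(\mathcal{A})\cong\Phi(\mathcal{A}')$ for all $\mathcal{A},\mathcal{A}'\in K$; $K\le_c K'$ means one exists, and $K\equiv_c K'$ means $K\le_c K'$ and $K'\le_c K$. $FUG$ is the class of finite undirected graphs; $FLO$ is the class of finite linear orders. *)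

(* Defs.v *)
From Stdlib Require Import List Arith.
Import ListNotations.

(* Untyped syntax; arguments are given as a list, missing arguments default
   to 0.  These are exactly the primitive recursive functions. *)
Inductive PR : Type :=
| PZero : PR
| PSucc : PR
| PProj : nat -> PR
| PComp : PR -> list PR -> PR
| PRec  : PR -> PR -> PR.

Fixpoint pr_eval (p : PR) (xs : list nat) {struct p} : nat :=
  match p with
  | PZero => 0
  | PSucc => S (hd 0 xs)
  | PProj i => nth i xs 0
  | PComp f gs =>
      pr_eval f ((fix evs (l : list PR) : list nat :=
                    match l with
                    | [] => []
                    | g :: l' => pr_eval g xs :: evs l'
                    end) gs)
  | PRec f g =>
      let rest := tl xs in
      (fix rec (n : nat) : nat :=
         match n with
         | 0 => pr_eval f rest
         | S m => pr_eval g (m :: rec m :: rest)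
         end) (hd 0 xs)
  end.

(* A set of naturals is c.e. iff it is the projection of a primitive
   recursive relation (Kleene normal form). *)
Definition ce (P : nat -> Prop) : Prop :=
  exists p : PR, forall n, P n <-> exists k, pr_eval p [n; k] <> 0.

Definition cpair (x y : nat) : nat := (x + y) * (x + y + 1) / 2 + y.

Fixpoint code_list (l : list nat) : nat :=
  match l with
  | [] => 0
  | x :: l' => S (cpair x (code_list l'))
  end.

(* A finite relational language is the list of arities of its symbols;
   symbol i has arity nth i L 0. *)
Definition language := list nat.

(* atomic sentences with constants naming natural numbers *)
Inductive atom : Type :=
| AEq  : nat -> nat -> atom
| ARel : nat -> list nat -> atom.

(* a literal: (true, phi) is phi, (false, phi) is the negation of phi *)
Definition literal : Type := (bool * atom)%type.

Definition code_atom (a : atom) : nat :=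
  match a with
  | AEq x y => cpair 0 (cpair x y)
  | ARel i args => cpair 1 (cpair i (code_list args))
  end.

Definition code_lit (l : literal) : nat :=
  cpair (if fst l then 1 else 0) (code_atom (snd l)).

Definition code_lits (al : list literal) : nat := code_list (map code_lit al).

Definition code_pair (x : list literal * literal) : nat :=
  cpair (code_lits (fst x)) (code_lit (snd x)).

Definition wf_atom (L : language) (a : atom) : Prop :=
  match a with
  | AEq _ _ => True
  | ARel i args => i < length L /\ length args = nth i L 0
  end.

Definition wf_lit (L : language) (l : literal) : Prop := wf_atom L (snd l).

(* A structure: universe a subset of omega, and interpretations of the
   relation symbols (only tuples from the universe matter). *)
Record structure : Type := Struct {
  univ : nat -> Prop;
  rel  : nat -> list nat -> Prop
}.

Definition consts (a : atom) : list nat :=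
  match a with
  | AEq x y => [x; y]
  | ARel _ args => args
  end.

Definition atom_true (A : structure) (a : atom) : Prop :=
  match a with
  | AEq x y => x = y
  | ARel i args => rel A i args
  end.

Definition in_diagram (L : language) (A : structure) (l : literal) : Prop :=
  wf_lit L l /\ Forall (univ A) (consts (snd l)) /\
  (atom_true A (snd l) <-> fst l = true).

Definition finite_structure (A : structure) : Prop :=
  exists u : list nat, forall x, univ A x <-> In x u.

Definition iso (L : language) (A B : structure) : Prop :=
  exists f g : nat -> nat,
    (forall x, univ A x -> univ B (f x) /\ g (f x) = x) /\
    (forall y, univ B y -> univ A (g y) /\ f (g y) = y) /\
    (forall i args, i < length L -> length args = nth i L 0 ->
       Forall (univ A) args -> (rel A i args <-> rel B i (map f args))).

Record cls : Type := Cls {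
  lang : language;
  mem  : structure -> Prop
}.

Definition iso_closed (K : cls) : Prop :=
  forall A B, iso (lang K) A B -> mem K A -> mem K B.

(* Phi is a set of pairs (alpha, phi), alpha a finite set of literals
   (given as a list). *)
Definition image (K K' : cls) (Phi : list literal * literal -> Prop)
  (A B : structure) : Prop :=
  forall phi : literal,
    (exists alpha, (forall psi, In psi alpha -> in_diagram (lang K) A psi) /\
                   Phi (alpha, phi))
    <-> in_diagram (lang K') B phi.

Definition computable_transformation (K K' : cls)
  (Phi : list literal * literal -> Prop) : Prop :=
  ce (fun n => exists x, code_pair x = n /\ Phi x) /\
  (forall alpha phi, Phi (alpha, phi) ->
     (exists C, finite_structure C /\
        forall psi, In psi alpha -> in_diagram (lang K) C psi) /\
     wf_lit (lang K') phi) /\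
  (forall A, mem K A -> exists B, mem K' B /\ image K K' Phi A B).

Definition computable_embedding (K K' : cls)
  (Phi : list literal * literal -> Prop) : Prop :=
  computable_transformation K K' Phi /\
  (forall A A' B B', mem K A -> mem K A' ->
     image K K' Phi A B -> image K K' Phi A' B' ->
     (iso (lang K) A A' <-> iso (lang K') B B')).

Definition le_c (K K' : cls) : Prop :=
  exists Phi, computable_embedding K K' Phi.

Definition equiv_c (K K' : cls) : Prop := le_c K K' /\ le_c K' K.

Definition FUG : cls := Cls [2] (fun A =>
  finite_structure A /\
  (forall x y, univ A x -> univ A y -> rel A 0 [x; y] -> rel A 0 [y; x]) /\
  (forall x, univ A x -> ~ rel A 0 [x; x])).

(* linear orders, with the symbol read as <= *)
Definition FLO : cls := Cls [2] (fun A =>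
  finite_structure A /\
  (forall x, univ A x -> rel A 0 [x; x]) /\
  (forall x y, univ A x -> univ A y -> rel A 0 [x; y] -> rel A 0 [y; x] -> x = y) /\
  (forall x y z, univ A x -> univ A y -> univ A z ->
     rel A 0 [x; y] -> rel A 0 [y; z] -> rel A 0 [x; z]) /\
  (forall x y, univ A x -> univ A y -> rel A 0 [x; y] \/ rel A 0 [y; x])).

(* Main.v *)
Require Import Defs.
From Stdlib Require Import List Arith Lia Classical Bool.
Import ListNotations.
Open Scope bool_scope.


Inductive E : Type :=
| EVar : nat -> E
| EZero : E
| ESucc : E -> E
| ELet : E -> E -> E
| ERec : E -> E -> E -> E.

Fixpoint iterR (f0 : nat) (g : nat -> nat -> nat) (k : nat) : nat :=
  match k with 0 => f0 | S m => g m (iterR f0 g m) end.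

Fixpoint eval (e : E) (env : list nat) : nat :=
  match e with
  | EVar i => nth i env 0
  | EZero => 0
  | ESucc a => S (eval a env)
  | ELet a b => eval b (eval a env :: env)
  | ERec n b s => iterR (eval b env) (fun m acc => eval s (m :: acc :: env)) (eval n env)
  end.

Lemma iterR_ext : forall f0 g g' k, (forall m a, m < k -> g m a = g' m a) ->
  iterR f0 g k = iterR f0 g' k.
Proof. intros f0 g g' k H. induction k; simpl; auto.
  rewrite H by lia. f_equal. apply IHk. intros; apply H; lia. Qed.

Definition projs (N : nat) : list PR := map PProj (seq 0 N).

Fixpoint comp (e : E) (N : nat) : PR :=
  match e with
  | EVar i => PProj i
  | EZero => PZero
  | ESucc a => PComp PSucc [comp a N]
  | ELet a b => PComp (comp b (S N)) (comp a N :: projs N)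
  | ERec n b s => PComp (PRec (comp b N) (comp s (S (S N)))) (comp n N :: projs N)
  end.

Fixpoint closed (e : E) (N : nat) : bool :=
  match e with
  | EVar i => i <? N
  | EZero => true
  | ESucc a => closed a N
  | ELet a b => closed a N && closed b (S N)
  | ERec n b s => closed n N && closed b N && closed s (S (S N))
  end.

Lemma pr_eval_comp : forall f gs xs,
  pr_eval (PComp f gs) xs = pr_eval f (map (fun g => pr_eval g xs) gs).
Proof. intros. simpl. f_equal. Qed.

Lemma pr_eval_rec : forall f g xs,
  pr_eval (PRec f g) xs = iterR (pr_eval f (tl xs)) (fun m r => pr_eval g (m :: r :: tl xs)) (hd 0 xs).
Proof. intros. simpl. induction (hd 0 xs); simpl; congruence. Qed.

Lemma eval_agree : forall e N env env', closed e N = true ->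
  (forall i, i < N -> nth i env 0 = nth i env' 0) -> eval e env = eval e env'.
Proof.
  induction e; intros N env env' Hc H; simpl in *.
  - apply H. apply Nat.ltb_lt; auto.
  - auto.
  - f_equal; eapply IHe; eauto.
  - apply andb_prop in Hc as [H1 H2].
    erewrite IHe1 by eauto. eapply IHe2; eauto.
    intros [|i] Hi; simpl; auto. apply H; lia.
  - apply andb_prop in Hc as [Hc H3]. apply andb_prop in Hc as [H1 H2].
    erewrite (IHe1 N env env') by eauto. erewrite (IHe2 N env env') by eauto.
    apply iterR_ext. intros m a _. eapply IHe3; eauto.
    intros [|[|i]] Hi; simpl; auto. apply H; lia.
Qed.

Lemma trunc_nth_gen : forall env N i s, i < N ->
  nth i (map (fun i => nth i env 0) (seq s N)) 0 = nth (s + i) env 0.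
Proof. intros env N. induction N; intros i s H; [lia|].
  simpl. destruct i; simpl. f_equal; lia. rewrite IHN by lia. f_equal; lia. Qed.
Lemma trunc_nth : forall env N i, i < N ->
  nth i (map (fun i => nth i env 0) (seq 0 N)) 0 = nth i env 0.
Proof. intros. rewrite trunc_nth_gen by auto. reflexivity. Qed.

Lemma map_projs : forall env N,
  map (fun g => pr_eval g env) (projs N) = map (fun i => nth i env 0) (seq 0 N).
Proof. intros. unfold projs. rewrite map_map. reflexivity. Qed.

Theorem comp_correct : forall e N env, closed e N = true ->
  pr_eval (comp e N) env = eval e env.
Proof.
  induction e; intros N env Hc; simpl comp.
  - reflexivity.
  - reflexivity.
  - rewrite pr_eval_comp. simpl map. simpl. f_equal. apply IHe. exact Hc.
  - simpl in Hc. apply andb_prop in Hc as [H1 H2].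
    rewrite pr_eval_comp. simpl map. rewrite map_projs.
    rewrite IHe2 by auto. rewrite IHe1 by auto. simpl.
    eapply eval_agree; eauto. intros [|i] Hi; simpl; auto.
    apply trunc_nth; lia.
  - simpl in Hc. apply andb_prop in Hc as [Hc H3]. apply andb_prop in Hc as [H1 H2].
    rewrite pr_eval_comp. simpl map. rewrite map_projs. rewrite pr_eval_rec. simpl hd. simpl tl.
    rewrite IHe1 by auto. rewrite IHe2 by auto. simpl.
    erewrite (eval_agree e2 N _ env) by (eauto; intros; apply trunc_nth; auto).
    apply iterR_ext. intros m a _. rewrite IHe3 by auto.
    eapply eval_agree; eauto. intros [|[|i]] Hi; simpl; auto. apply trunc_nth; lia.
Qed.

Fixpoint lift (c d : nat) (e : E) : E :=
  match e with
  | EVar i => if i <? c then EVar i else EVar (i + d)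
  | EZero => EZero
  | ESucc a => ESucc (lift c d a)
  | ELet a b => ELet (lift c d a) (lift (S c) d b)
  | ERec n b s => ERec (lift c d n) (lift c d b) (lift (S (S c)) d s)
  end.

Lemma eval_lift : forall e c d pre ext env, length pre = c -> length ext = d ->
  eval (lift c d e) (pre ++ ext ++ env) = eval e (pre ++ env).
Proof.
  induction e; intros c d pre ext env Hc Hd; simpl.
  - destruct (n <? c) eqn:E1; simpl.
    + apply Nat.ltb_lt in E1. rewrite !app_nth1 by lia. auto.
    + apply Nat.ltb_ge in E1. rewrite !app_nth2 by lia.
      f_equal. lia.
  - auto.
  - f_equal; auto.
  - rewrite IHe1 by auto. apply (IHe2 (S c) d (eval e1 (pre ++ env) :: pre)); simpl; auto.
  - rewrite IHe1, IHe2 by auto. apply iterR_ext. intros m a _.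
    apply (IHe3 (S (S c)) d (m :: a :: pre)); simpl; auto.
Qed.

Lemma eval_lift1 : forall e x env, eval (lift 0 1 e) (x :: env) = eval e env.
Proof. intros. apply (eval_lift e 0 1 [] [x]); auto. Qed.
Lemma eval_lift2 : forall e x y env, eval (lift 0 2 e) (x :: y :: env) = eval e env.
Proof. intros. apply (eval_lift e 0 2 [] [x;y]); auto. Qed.
Lemma eval_lift3 : forall e x y z env, eval (lift 0 3 e) (x :: y :: z :: env) = eval e env.
Proof. intros. apply (eval_lift e 0 3 [] [x;y;z]); auto. Qed.
Lemma eval_lift4 : forall e x y z w env, eval (lift 0 4 e) (x :: y :: z :: w :: env) = eval e env.
Proof. intros. apply (eval_lift e 0 4 [] [x;y;z;w]); auto. Qed.
Lemma eval_lift11 : forall e x y env, eval (lift 1 1 e) (x :: y :: env) = eval e (x :: env).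
Proof. intros. apply (eval_lift e 1 1 [x] [y]); auto. Qed.


Definition b2n (b : bool) : nat := if b then 1 else 0.

Definition Add a b := ERec b a (ESucc (EVar 1)).
Arguments Add : simpl never.
Lemma eval_Add a b env : eval (Add a b) env = eval a env + eval b env.
Proof. unfold Add; cbn. induction (eval b env) as [|k IH]; cbn; [lia|rewrite IH; lia]. Qed.

Definition Mul a b := ERec b EZero (Add (EVar 1) (lift 0 2 a)).
Arguments Mul : simpl never.
Lemma eval_Mul a b env : eval (Mul a b) env = eval a env * eval b env.
Proof. unfold Mul. cbn. induction (eval b env) as [|k IH]; cbn; [lia|].
  rewrite eval_Add, eval_lift2. cbn. rewrite IH. lia. Qed.

Definition Pred a := ERec a EZero (EVar 0).
Arguments Pred : simpl never.
Lemma eval_Pred a env : eval (Pred a) env = eval a env - 1.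
Proof. unfold Pred; cbn. destruct (eval a env); cbn; lia. Qed.

Definition Sub a b := ERec b a (Pred (EVar 1)).
Arguments Sub : simpl never.
Lemma eval_Sub a b env : eval (Sub a b) env = eval a env - eval b env.
Proof. unfold Sub. cbn. induction (eval b env) as [|k IH]; cbn; [lia|].
  rewrite eval_Pred. cbn. rewrite IH. lia. Qed.

Definition NotE a := ERec a (ESucc EZero) EZero.
Arguments NotE : simpl never.
Lemma eval_NotE a env : eval (NotE a) env = b2n (eval a env =? 0).
Proof. unfold NotE; cbn. destruct (eval a env); reflexivity. Qed.

Definition EqE a b := NotE (Add (Sub a b) (Sub b a)).
Arguments EqE : simpl never.
Lemma eval_EqE a b env : eval (EqE a b) env = b2n (eval a env =? eval b env).
Proof. unfold EqE. rewrite eval_NotE, eval_Add, !eval_Sub.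
  destruct (eval a env =? eval b env) eqn:H1.
  - apply Nat.eqb_eq in H1. rewrite H1. rewrite Nat.sub_diag. reflexivity.
  - apply Nat.eqb_neq in H1. replace (eval a env - eval b env + (eval b env - eval a env) =? 0) with false. reflexivity.
    symmetry. apply Nat.eqb_neq. lia. Qed.

Definition LeE a b := NotE (Sub a b).
Arguments LeE : simpl never.
Lemma eval_LeE a b env : eval (LeE a b) env = b2n (eval a env <=? eval b env).
Proof. unfold LeE. rewrite eval_NotE, eval_Sub.
  destruct (eval a env <=? eval b env) eqn:H1.
  - apply Nat.leb_le in H1. replace (eval a env - eval b env) with 0 by lia. reflexivity.
  - apply Nat.leb_gt in H1. replace (eval a env - eval b env =? 0) with false. reflexivity.
    symmetry. apply Nat.eqb_neq. lia. Qed.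

Definition LtE a b := LeE (ESucc a) b.
Arguments LtE : simpl never.
Lemma eval_LtE a b env : eval (LtE a b) env = b2n (eval a env <? eval b env).
Proof. unfold LtE. rewrite eval_LeE. reflexivity. Qed.

Definition AndE a b := Mul a b.
Arguments AndE : simpl never.
Lemma eval_AndE a b env x y : eval a env = b2n x -> eval b env = b2n y ->
  eval (AndE a b) env = b2n (x && y).
Proof. intros H1 H2. unfold AndE. rewrite eval_Mul, H1, H2. destruct x, y; reflexivity. Qed.

Definition OrE a b := NotE (NotE (Add a b)).
Arguments OrE : simpl never.
Lemma eval_OrE a b env x y : eval a env = b2n x -> eval b env = b2n y ->
  eval (OrE a b) env = b2n (x || y).
Proof. intros H1 H2. unfold OrE. rewrite !eval_NotE, eval_Add, H1, H2. destruct x, y; reflexivity. Qed.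

Lemma eval_NotE_b a env x : eval a env = b2n x -> eval (NotE a) env = b2n (negb x).
Proof. intros H1. rewrite eval_NotE, H1. destruct x; reflexivity. Qed.

Definition Ite c a b := Add (Mul (NotE (NotE c)) a) (Mul (NotE c) b).
Arguments Ite : simpl never.
Lemma eval_Ite c a b env : eval (Ite c a b) env =
  if eval c env =? 0 then eval b env else eval a env.
Proof. unfold Ite. rewrite eval_Add, !eval_Mul, !eval_NotE.
  destruct (eval c env =? 0); cbn; lia. Qed.

Definition Pow a b := ERec b (ESucc EZero) (Mul (EVar 1) (lift 0 2 a)).
Arguments Pow : simpl never.
Lemma eval_Pow a b env : eval (Pow a b) env = eval a env ^ eval b env.
Proof. unfold Pow. cbn. induction (eval b env) as [|k IH]; cbn; [lia|].
  rewrite eval_Mul, eval_lift2. cbn. rewrite IH. lia. Qed.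

Lemma modS : forall a d, S a mod d = if S (a mod d) =? d then 0 else S (a mod d).
Proof.
  intros a d. destruct d as [|d'].
  - cbn. reflexivity.
  - set (d := S d'). assert (Hd : d <> 0) by (unfold d; lia).
    pose proof (Nat.div_mod a d Hd) as Ha. pose proof (Nat.mod_upper_bound a d Hd) as Hr.
    destruct (S (a mod d) =? d) eqn:E1.
    + apply Nat.eqb_eq in E1. symmetry. apply (Nat.mod_unique (S a) d (S (a / d)) 0); lia.
    + apply Nat.eqb_neq in E1. symmetry. apply (Nat.mod_unique (S a) d (a / d)); lia.
Qed.

Lemma divS : forall a d, S a / d = if S (a mod d) =? d then S (a / d) else a / d.
Proof.
  intros a d. destruct d as [|d'].
  - cbn. reflexivity.
  - set (d := S d'). assert (Hd : d <> 0) by (unfold d; lia).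
    pose proof (Nat.div_mod a d Hd) as Ha. pose proof (Nat.mod_upper_bound a d Hd) as Hr.
    destruct (S (a mod d) =? d) eqn:E1.
    + apply Nat.eqb_eq in E1. symmetry. apply (Nat.div_unique (S a) d (S (a / d)) 0); lia.
    + apply Nat.eqb_neq in E1. symmetry. apply (Nat.div_unique (S a) d (a / d) (S (a mod d))); lia.
Qed.

Definition Mod a d := ERec a EZero (Ite (EqE (ESucc (EVar 1)) (lift 0 2 d)) EZero (ESucc (EVar 1))).
Arguments Mod : simpl never.
Lemma eval_Mod a d env : eval (Mod a d) env = eval a env mod eval d env.
Proof. unfold Mod. cbn. induction (eval a env) as [|k IH]; cbn [iterR].
  - symmetry. destruct (eval d env). reflexivity. apply Nat.mod_0_l. lia.
  - rewrite eval_Ite, eval_EqE. cbn [eval nth]. rewrite eval_lift2. rewrite IH. rewrite modS.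
    destruct (S (k mod eval d env) =? eval d env); reflexivity. Qed.

Definition Div a d := ERec a EZero
  (Ite (EqE (ESucc (Mod (EVar 0) (lift 0 2 d))) (lift 0 2 d)) (ESucc (EVar 1)) (EVar 1)).
Arguments Div : simpl never.
Lemma eval_Div a d env : eval (Div a d) env = eval a env / eval d env.
Proof. unfold Div. cbn. induction (eval a env) as [|k IH]; cbn [iterR].
  - symmetry. destruct (eval d env). reflexivity. apply Nat.div_0_l. lia.
  - rewrite eval_Ite, eval_EqE. cbn [eval nth]. rewrite eval_Mod, eval_lift2. cbn [eval nth]. rewrite IH. rewrite divS.
    destruct (S (k mod eval d env) =? eval d env); reflexivity. Qed.

Definition dig (x b i : nat) : nat := (x / b ^ i) mod b.
Definition Dig x b i := Mod (Div x (Pow b i)) b.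
Arguments Dig : simpl never.
Lemma eval_Dig x b i env : eval (Dig x b i) env = dig (eval x env) (eval b env) (eval i env).
Proof. unfold Dig. rewrite eval_Mod, eval_Div, eval_Pow. reflexivity. Qed.

Fixpoint tri (n : nat) : nat := match n with 0 => 0 | S k => tri k + S k end.
Definition Tri a := ERec a EZero (Add (EVar 1) (ESucc (EVar 0))).
Arguments Tri : simpl never.
Lemma eval_Tri a env : eval (Tri a) env = tri (eval a env).
Proof. unfold Tri. cbn. induction (eval a env) as [|k IH]; cbn; auto.
  rewrite eval_Add. cbn. rewrite IH. reflexivity. Qed.

Lemma tri2 : forall s, 2 * tri s = s * (s + 1).
Proof. induction s; cbn [tri]; [reflexivity|]. nia. Qed.

Lemma cpair_tri : forall x y, cpair x y = tri (x + y) + y.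
Proof. intros. unfold cpair. f_equal. rewrite <- tri2. rewrite Nat.mul_comm. apply Nat.div_mul. lia. Qed.

Definition Cp a b := Add (Tri (Add a b)) b.
Arguments Cp : simpl never.
Lemma eval_Cp a b env : eval (Cp a b) env = cpair (eval a env) (eval b env).
Proof. unfold Cp. rewrite eval_Add, eval_Tri, eval_Add, cpair_tri. reflexivity. Qed.

Fixpoint Num (n : nat) : E := match n with 0 => EZero | S k => ESucc (Num k) end.
Lemma eval_Num n env : eval (Num n) env = n.
Proof. induction n; cbn; auto. Qed.

Definition sumto (n : nat) (f : nat -> nat) : nat := iterR 0 (fun m acc => acc + f m) n.
Definition Sum n body := ERec n EZero (Add (EVar 1) (lift 1 1 body)).
Arguments Sum : simpl never.
Lemma eval_Sum n body env : eval (Sum n body) env = sumto (eval n env) (fun m => eval body (m :: env)).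
Proof. unfold Sum, sumto. cbn. apply iterR_ext. intros. rewrite eval_Add, eval_lift11. reflexivity. Qed.

Lemma sumto_neq0 : forall n f, sumto n f <> 0 <-> exists m, m < n /\ f m <> 0.
Proof. unfold sumto. induction n; intros f; cbn; split.
  - lia.
  - intros [m [H _]]; lia.
  - intros H. destruct (f n) eqn:Ef.
    + rewrite Nat.add_0_r in H. apply IHn in H as [m [H1 H2]]. exists m; split; auto.
    + exists n. split; [lia|congruence].
  - intros [m [H1 H2]]. destruct (Nat.eq_dec m n).
    + subst. lia.
    + assert (iterR 0 (fun m0 acc => acc + f m0) n <> 0). apply IHn. exists m; split; [lia|auto]. lia.
Qed.

Fixpoint allb (n : nat) (P : nat -> bool) : bool :=
  match n with 0 => true | S m => allb m P && P m end.
Lemma allb_spec : forall n P, allb n P = true <-> forall m, m < n -> P m = true.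
Proof. induction n; intros P; cbn; split; auto.
  - intros _ m H; lia.
  - intros H. apply andb_prop in H as [H1 H2]. intros m Hm.
    destruct (Nat.eq_dec m n). subst; auto. apply IHn; auto. lia.
  - intros H. apply andb_true_intro; split. apply IHn. intros; apply H; lia. apply H; lia.
Qed.

Definition Fa n body := ERec n (ESucc EZero) (Mul (EVar 1) (lift 1 1 body)).
Arguments Fa : simpl never.

Lemma eval_Fa n body env P : (forall m, eval body (m :: env) = b2n (P m)) ->
  eval (Fa n body) env = b2n (allb (eval n env) P).
Proof. intros H. unfold Fa. cbn. induction (eval n env) as [|k IH]; cbn; auto.
  rewrite eval_Mul, eval_lift11, H. cbn. rewrite IH. destruct (allb k P), (P k); reflexivity. Qed.


Definition injb b T m := allb m (fun i => allb m (fun j => (i =? j) || negb (dig T b i =? dig T b j))).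
Definition off m := sumto m (fun k => 2 ^ (k * k)).
Definition validb b T m c j := injb b T m && (c <? 2 ^ (m * m)) && (j <? 2 ^ (off m + c)).
Definition consb b1 T1 m1 c1 b2 T2 m2 c2 :=
  allb m1 (fun i => allb m1 (fun j => allb m2 (fun i' => allb m2 (fun j' =>
   negb ((dig T1 b1 i =? dig T2 b2 i') && (dig T1 b1 j =? dig T2 b2 j'))
   || (dig c1 2 (i*m1+j) =? dig c2 2 (i'*m2+j')))))).
Definition lab m c j := 2 ^ (off m + c) + j.
Definition litk b T m c k : literal :=
  (dig c 2 k =? 1, ARel 0 [dig T b (k / m); dig T b (k mod m)]).
Fixpoint alphN b T m c N : list literal :=
  match N with 0 => [] | S k => litk b T m c k :: alphN b T m c k end.
Definition alph b T m c := alphN b T m c (m * m).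
Definition outb (lo : bool) x y := if lo then x <=? y else false.
Definition phil lo kind l1 l2 : literal :=
  if kind =? 0 then (l1 =? l2, AEq l1 l2) else (outb lo l1 l2, ARel 0 [l1; l2]).
Definition elem lo b1 T1 m1 c1 j1 b2 T2 m2 c2 j2 kind :=
  (alph b1 T1 m1 c1 ++ alph b2 T2 m2 c2, phil lo kind (lab m1 c1 j1) (lab m2 c2 j2)).
Definition okb b1 T1 m1 c1 j1 b2 T2 m2 c2 j2 :=
  validb b1 T1 m1 c1 j1 && validb b2 T2 m2 c2 j2 && consb b1 T1 m1 c1 b2 T2 m2 c2.
Definition PhiG lo (x : list literal * literal) : Prop :=
  exists b1 T1 m1 c1 j1 b2 T2 m2 c2 j2 kind,
    okb b1 T1 m1 c1 j1 b2 T2 m2 c2 j2 = true /\ x = elem lo b1 T1 m1 c1 j1 b2 T2 m2 c2 j2 kind.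

Ltac fa := erewrite eval_Fa; [ rewrite ?eval_lift1, ?eval_lift2, ?eval_lift3; reflexivity | intro; cbv beta ].
Definition InjE b T m := Fa m (Fa (lift 0 1 m) (OrE (EqE (EVar 1) (EVar 0))
  (NotE (EqE (Dig (lift 0 2 T) (lift 0 2 b) (EVar 1)) (Dig (lift 0 2 T) (lift 0 2 b) (EVar 0)))))).
Lemma eval_InjE b T m env : eval (InjE b T m) env = b2n (injb (eval b env) (eval T env) (eval m env)).
Proof. unfold InjE, injb. apply eval_Fa. intros i. fa. apply eval_OrE. apply eval_EqE. apply eval_NotE_b.
  rewrite eval_EqE, !eval_Dig, !eval_lift2. reflexivity. Qed.

Definition OffE m := Sum m (Pow (Num 2) (Mul (EVar 0) (EVar 0))).
Lemma eval_OffE m env : eval (OffE m) env = off (eval m env).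
Proof. unfold OffE, off. rewrite eval_Sum. unfold sumto. apply iterR_ext. intros.
  rewrite eval_Pow, eval_Num, eval_Mul. reflexivity. Qed.

Definition ValidE b T m c j := AndE (AndE (InjE b T m) (LtE c (Pow (Num 2) (Mul m m))))
  (LtE j (Pow (Num 2) (Add (OffE m) c))).
Lemma eval_ValidE b T m c j env : eval (ValidE b T m c j) env =
  b2n (validb (eval b env) (eval T env) (eval m env) (eval c env) (eval j env)).
Proof. unfold ValidE, validb. apply eval_AndE. apply eval_AndE. apply eval_InjE.
  rewrite eval_LtE, eval_Pow, eval_Num, eval_Mul. reflexivity.
  rewrite eval_LtE, eval_Pow, eval_Num, eval_Add, eval_OffE. reflexivity. Qed.

Definition L4 x := lift 0 4 x.
Definition ConsE b1 T1 m1 c1 b2 T2 m2 c2 :=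
  Fa m1 (Fa (lift 0 1 m1) (Fa (lift 0 2 m2) (Fa (lift 0 3 m2)
   (OrE (NotE (AndE (EqE (Dig (L4 T1) (L4 b1) (EVar 3)) (Dig (L4 T2) (L4 b2) (EVar 1)))
                    (EqE (Dig (L4 T1) (L4 b1) (EVar 2)) (Dig (L4 T2) (L4 b2) (EVar 0)))))
        (EqE (Dig (L4 c1) (Num 2) (Add (Mul (EVar 3) (L4 m1)) (EVar 2)))
             (Dig (L4 c2) (Num 2) (Add (Mul (EVar 1) (L4 m2)) (EVar 0)))))))).
Lemma eval_ConsE b1 T1 m1 c1 b2 T2 m2 c2 env : eval (ConsE b1 T1 m1 c1 b2 T2 m2 c2) env =
  b2n (consb (eval b1 env) (eval T1 env) (eval m1 env) (eval c1 env)
             (eval b2 env) (eval T2 env) (eval m2 env) (eval c2 env)).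
Proof. unfold ConsE, consb, L4. apply eval_Fa. intros i. fa. fa. fa. apply eval_OrE. apply eval_NotE_b. apply eval_AndE.
  - rewrite eval_EqE, !eval_Dig, !eval_lift4. reflexivity.
  - rewrite eval_EqE, !eval_Dig, !eval_lift4. reflexivity.
  - rewrite eval_EqE, !eval_Dig, !eval_Add, !eval_Mul, !eval_lift4, !eval_Num. reflexivity.
Qed.

Definition LabE m c j := Add (Pow (Num 2) (Add (OffE m) c)) j.
Lemma eval_LabE m c j env : eval (LabE m c j) env = lab (eval m env) (eval c env) (eval j env).
Proof. unfold LabE, lab. rewrite eval_Add, eval_Pow, eval_Num, eval_Add, eval_OffE. reflexivity. Qed.

Definition L2 x := lift 0 2 x.
Definition LitE b T m c :=
  Cp (Dig (L2 c) (Num 2) (EVar 0)) (Cp (Num 1) (Cp (Num 0) (ESucc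
    (Cp (Dig (L2 T) (L2 b) (Div (EVar 0) (L2 m)))
      (ESucc (Cp (Dig (L2 T) (L2 b) (Mod (EVar 0) (L2 m))) EZero)))))).

Lemma dig2 : forall c k, (if dig c 2 k =? 1 then 1 else 0) = dig c 2 k.
Proof. intros. unfold dig. assert (H : (c / 2 ^ k) mod 2 < 2) by (apply Nat.mod_upper_bound; lia).
  destruct ((c / 2 ^ k) mod 2) as [|[|]]; simpl; lia. Qed.

Lemma eval_LitE b T m c k acc env : eval (LitE b T m c) (k :: acc :: env) =
  code_lit (litk (eval b env) (eval T env) (eval m env) (eval c env) k).
Proof. unfold LitE, L2, litk, code_lit. cbn [fst snd code_atom code_list].
  repeat (rewrite ?eval_Cp, ?eval_Num, ?eval_Dig, ?eval_Div, ?eval_Mod, ?eval_lift2; cbn [eval nth]).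
  rewrite dig2. reflexivity. Qed.

Definition AlphE b T m c r := ERec (Mul m m) r (ESucc (Cp (LitE b T m c) (EVar 1))).
Lemma eval_AlphE b T m c r env rl : eval r env = code_list (map code_lit rl) ->
  eval (AlphE b T m c r) env =
  code_list (map code_lit (alph (eval b env) (eval T env) (eval m env) (eval c env) ++ rl)).
Proof. intros H. unfold AlphE, alph. cbn [eval]. rewrite eval_Mul.
  induction (eval m env * eval m env) as [|N IH]; cbn [iterR alphN app map code_list].
  - auto.
  - rewrite eval_Cp, eval_LitE. cbn [eval nth]. rewrite IH. reflexivity. Qed.

Definition OutE (lo : bool) a b := if lo then LeE a b else EZero.
Lemma eval_OutE lo a b env : eval (OutE lo a b) env = b2n (outb lo (eval a env) (eval b env)).
Proof. destruct lo; simpl. apply eval_LeE. reflexivity. Qed.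

Definition PhiE lo kind l1 l2 :=
  Ite kind (Cp (OutE lo l1 l2) (Cp (Num 1) (Cp (Num 0) (ESucc (Cp l1 (ESucc (Cp l2 EZero)))))))
           (Cp (EqE l1 l2) (Cp (Num 0) (Cp l1 l2))).
Lemma eval_PhiE lo kind l1 l2 env : eval (PhiE lo kind l1 l2) env =
  code_lit (phil lo (eval kind env) (eval l1 env) (eval l2 env)).
Proof. unfold PhiE, phil. rewrite eval_Ite.
  destruct (eval kind env =? 0); unfold code_lit; cbn [fst snd code_atom code_list].
  - rewrite !eval_Cp, eval_EqE, eval_Num. unfold b2n. reflexivity.
  - repeat (rewrite ?eval_Cp, ?eval_OutE, ?eval_Num; cbn [eval]). reflexivity. Qed.

Definition CodeE lo b1 T1 m1 c1 j1 b2 T2 m2 c2 j2 kind :=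
  Cp (AlphE b1 T1 m1 c1 (AlphE b2 T2 m2 c2 EZero)) (PhiE lo kind (LabE m1 c1 j1) (LabE m2 c2 j2)).
Lemma eval_CodeE lo b1 T1 m1 c1 j1 b2 T2 m2 c2 j2 kind env :
  eval (CodeE lo b1 T1 m1 c1 j1 b2 T2 m2 c2 j2 kind) env =
  code_pair (elem lo (eval b1 env) (eval T1 env) (eval m1 env) (eval c1 env) (eval j1 env)
                     (eval b2 env) (eval T2 env) (eval m2 env) (eval c2 env) (eval j2 env) (eval kind env)).
Proof. unfold CodeE, elem, code_pair, code_lits. cbn [fst snd]. rewrite eval_Cp, eval_PhiE, !eval_LabE.
  f_equal. rewrite <- (app_nil_r (alph _ _ _ _ ++ alph _ _ _ _)). rewrite <- app_assoc.
  apply eval_AlphE. apply (eval_AlphE _ _ _ _ _ _ []). reflexivity. Qed.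

Definition OkE b1 T1 m1 c1 j1 b2 T2 m2 c2 j2 :=
  AndE (AndE (ValidE b1 T1 m1 c1 j1) (ValidE b2 T2 m2 c2 j2)) (ConsE b1 T1 m1 c1 b2 T2 m2 c2).
Lemma eval_OkE b1 T1 m1 c1 j1 b2 T2 m2 c2 j2 env : eval (OkE b1 T1 m1 c1 j1 b2 T2 m2 c2 j2) env =
  b2n (okb (eval b1 env) (eval T1 env) (eval m1 env) (eval c1 env) (eval j1 env)
           (eval b2 env) (eval T2 env) (eval m2 env) (eval c2 env) (eval j2 env)).
Proof. unfold OkE, okb. apply eval_AndE. apply eval_AndE; apply eval_ValidE. apply eval_ConsE. Qed.

Definition TEST lo :=
  Mul (OkE (EVar 10) (EVar 9) (EVar 8) (EVar 7) (EVar 6) (EVar 5) (EVar 4) (EVar 3) (EVar 2) (EVar 1))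
      (EqE (EVar 11) (CodeE lo (EVar 10) (EVar 9) (EVar 8) (EVar 7) (EVar 6) (EVar 5) (EVar 4) (EVar 3) (EVar 2) (EVar 1) (EVar 0))).
Lemma eval_TEST lo b1 T1 m1 c1 j1 b2 T2 m2 c2 j2 kind n rest :
  eval (TEST lo) (kind :: j2 :: c2 :: m2 :: T2 :: b2 :: j1 :: c1 :: m1 :: T1 :: b1 :: n :: rest) =
  b2n (okb b1 T1 m1 c1 j1 b2 T2 m2 c2 j2) *
  b2n (n =? code_pair (elem lo b1 T1 m1 c1 j1 b2 T2 m2 c2 j2 kind)).
Proof. unfold TEST. rewrite eval_Mul, eval_OkE, eval_EqE, eval_CodeE. reflexivity. Qed.

Definition BIG lo :=
  Sum (EVar 1) (Sum (EVar 2) (Sum (EVar 3) (Sum (EVar 4) (Sum (EVar 5) (Sum (EVar 6)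
  (Sum (EVar 7) (Sum (EVar 8) (Sum (EVar 9) (Sum (EVar 10) (Sum (EVar 11) (TEST lo))))))))))).

Lemma closed_BIG : forall lo, closed (BIG lo) 2 = true.
Proof. destruct lo; vm_compute; reflexivity. Qed.


Lemma ce_PhiG : forall lo, ce (fun n => exists x, code_pair x = n /\ PhiG lo x).
Proof.
  intros lo. exists (comp (BIG lo) 2). intros n.
  split.
  - intros [x [Hx [b1 [T1 [m1 [c1 [j1 [b2 [T2 [m2 [c2 [j2 [kind [Hok He]]]]]]]]]]]]]].
    exists (S (b1 + T1 + m1 + c1 + j1 + b2 + T2 + m2 + c2 + j2 + kind)).
    rewrite comp_correct by apply closed_BIG. unfold BIG.
    Ltac step v := rewrite eval_Sum; apply sumto_neq0; exists v; split; [cbn [eval nth]; lia | ].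
    step b1. step T1. step m1. step c1. step j1. step b2. step T2. step m2. step c2. step j2. step kind.
    rewrite eval_TEST, Hok. subst. rewrite Nat.eqb_refl. simpl. lia.
  - intros [k H]. rewrite comp_correct in H by apply closed_BIG. unfold BIG in H.
    repeat (rewrite eval_Sum in H; apply sumto_neq0 in H; destruct H as [? [_ H]]).
    rewrite eval_TEST in H.
    match type of H with b2n (okb ?b1 ?T1 ?m1 ?c1 ?j1 ?b2 ?T2 ?m2 ?c2 ?j2) * b2n (_ =? code_pair (elem lo _ _ _ _ _ _ _ _ _ _ ?kind)) <> 0 =>
      exists (elem lo b1 T1 m1 c1 j1 b2 T2 m2 c2 j2 kind);
      destruct (okb b1 T1 m1 c1 j1 b2 T2 m2 c2 j2) eqn:Hok; [|simpl in H; lia];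
      destruct (n =? code_pair (elem lo b1 T1 m1 c1 j1 b2 T2 m2 c2 j2 kind)) eqn:Hn; [|simpl in H; lia];
      apply Nat.eqb_eq in Hn; split; [auto|];
      exists b1, T1, m1, c1, j1, b2, T2, m2, c2, j2, kind; split; auto
    end.
Qed.


Lemma divmod_ij : forall m i j, j < m -> (i * m + j) / m = i /\ (i * m + j) mod m = j.
Proof. intros m i j H. split.
  - rewrite Nat.div_add_l by lia. rewrite Nat.div_small by lia. lia.
  - rewrite Nat.add_comm, Nat.mod_add by lia. apply Nat.mod_small; lia. Qed.

Lemma In_alphN : forall b T m c N psi, In psi (alphN b T m c N) <-> exists k, k < N /\ psi = litk b T m c k.
Proof. induction N; intros psi; simpl; split.
  - tauto.
  - intros [k [H _]]; lia.
  - intros [H|H]. exists N; split; auto. apply IHN in H as [k [H1 H2]]. exists k; split; auto.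
  - intros [k [H1 H2]]. destruct (Nat.eq_dec k N). subst; auto. right. apply IHN. exists k; split; auto; lia.
Qed.

Definition realizes (A : structure) b T m c :=
  forall psi, In psi (alph b T m c) -> in_diagram [2] A psi.

Lemma pat_rel : forall A b T m c i j, realizes A b T m c -> i < m -> j < m ->
  univ A (dig T b i) /\ univ A (dig T b j) /\
  (rel A 0 [dig T b i; dig T b j] <-> dig c 2 (i * m + j) = 1).
Proof.
  intros A b T m c i j HR Hi Hj.
  assert (Hk : i * m + j < m * m) by nia.
  assert (HI : In (litk b T m c (i * m + j)) (alph b T m c)).
  { apply In_alphN. exists (i*m+j); auto. }
  apply HR in HI. unfold litk, in_diagram in HI. cbn [fst snd consts atom_true] in HI.
  destruct (divmod_ij m i j Hj) as [E1 E2]. rewrite E1, E2 in HI.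
  destruct HI as [_ [HF HT]]. inversion HF; subst. inversion H2; subst.
  split; auto. split; auto. rewrite HT. apply Nat.eqb_eq.
Qed.

Lemma realizes_intro : forall A b T m c,
  (forall i j, i < m -> j < m -> univ A (dig T b i) /\
     (rel A 0 [dig T b i; dig T b j] <-> dig c 2 (i * m + j) = 1)) ->
  realizes A b T m c.
Proof.
  intros A b T m c H psi Hpsi. apply In_alphN in Hpsi as [k [Hk ->]].
  assert (Hm : m <> 0) by (intro; subst; simpl in Hk; lia).
  set (i := k / m). set (j := k mod m).
  assert (Hj : j < m) by (apply Nat.mod_upper_bound; auto).
  assert (Hkij : k = i * m + j) by (unfold i, j; rewrite Nat.mul_comm; apply Nat.div_mod; auto).
  assert (Hi : i < m) by nia.
  unfold litk, in_diagram. cbn [fst snd consts atom_true wf_lit wf_atom]. fold i j.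
  destruct (H i j Hi Hj) as [Hu1 Hr]. destruct (H j i Hj Hi) as [Hu2 _].
  split. simpl; auto. split. repeat constructor; auto.
  rewrite Hr, <- Hkij. symmetry. apply Nat.eqb_eq.
Qed.

Lemma injb_spec : forall b T m, injb b T m = true <->
  (forall i j, i < m -> j < m -> dig T b i = dig T b j -> i = j).
Proof. intros. unfold injb. rewrite allb_spec. split.
  - intros H i j Hi Hj Heq. specialize (H i Hi). rewrite allb_spec in H. specialize (H j Hj).
    apply orb_prop in H as [H|H]. apply Nat.eqb_eq; auto. rewrite Heq, Nat.eqb_refl in H. discriminate.
  - intros H i Hi. apply allb_spec. intros j Hj. destruct (Nat.eq_dec i j).
    subst. rewrite Nat.eqb_refl. auto.
    apply orb_true_intro. right. apply negb_true_iff. apply Nat.eqb_neq. intro. apply n. auto.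
Qed.

Lemma consb_spec : forall b1 T1 m1 c1 b2 T2 m2 c2, consb b1 T1 m1 c1 b2 T2 m2 c2 = true <->
  (forall i j i' j', i < m1 -> j < m1 -> i' < m2 -> j' < m2 ->
     dig T1 b1 i = dig T2 b2 i' -> dig T1 b1 j = dig T2 b2 j' ->
     dig c1 2 (i*m1+j) = dig c2 2 (i'*m2+j')).
Proof. intros. unfold consb. split.
  - intros H i j i' j' Hi Hj Hi' Hj' E1 E2.
    rewrite allb_spec in H. specialize (H i Hi). rewrite allb_spec in H. specialize (H j Hj).
    rewrite allb_spec in H. specialize (H i' Hi'). rewrite allb_spec in H. specialize (H j' Hj').
    rewrite E1, E2, !Nat.eqb_refl in H. simpl in H. apply Nat.eqb_eq; auto.
  - intros H. apply allb_spec; intros i Hi. apply allb_spec; intros j Hj.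
    apply allb_spec; intros i' Hi'. apply allb_spec; intros j' Hj'.
    destruct (dig T1 b1 i =? dig T2 b2 i') eqn:E1; [|reflexivity].
    destruct (dig T1 b1 j =? dig T2 b2 j') eqn:E2; [|reflexivity].
    apply Nat.eqb_eq in E1, E2. simpl. apply Nat.eqb_eq. apply H; auto.
Qed.

Lemma validb_spec : forall b T m c j, validb b T m c j = true <->
  injb b T m = true /\ c < 2 ^ (m * m) /\ j < 2 ^ (off m + c).
Proof. intros. unfold validb. rewrite !andb_true_iff, !Nat.ltb_lt. tauto. Qed.

Lemma dig2_lt : forall c k, dig c 2 k < 2.
Proof. intros. unfold dig. apply Nat.mod_upper_bound. lia. Qed.


Lemma fin_sub : forall (P : nat -> Prop) l, (forall x, P x -> In x l) ->
  exists u, NoDup u /\ forall x, P x <-> In x u.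
Proof.
  intros P l. revert P. induction l; intros P H.
  - exists []. split. constructor. intros x; split; [apply H|simpl; tauto].
  - destruct (IHl (fun x => P x /\ x <> a)) as [u [Hu1 Hu2]].
    { intros x [Hx Hne]. destruct (H x Hx); [congruence|auto]. }
    destruct (classic (P a)) as [Ha|Ha].
    + exists (a :: u). split. constructor; auto. intro Hin. apply Hu2 in Hin. tauto.
      intros x. simpl. rewrite <- Hu2. split.
      * intros Hx. destruct (Nat.eq_dec a x); [left; auto | right; split; auto].  
      * intros [->|[Hx _]]; auto.
    + exists u. split; auto. intros x. rewrite <- Hu2. split.
      * intros Hx. split; auto. intro; subst; auto.
      * tauto.
Qed.

Lemma NoDup_map_seq : forall (t : nat -> nat) m s,
  (forall i j, s <= i < s + m -> s <= j < s + m -> t i = t j -> i = j) ->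
  NoDup (map t (seq s m)).
Proof.
  intros t m. induction m; intros s H; simpl. constructor.
  constructor.
  - intros Hin. apply in_map_iff in Hin as [i [E Hi]]. apply in_seq in Hi.
    assert (i = s) by (apply H; lia). lia.
  - apply IHm. intros; apply H; lia.
Qed.

Lemma pigeon : forall (t : nat -> nat) m u,
  (forall i j, i < m -> j < m -> t i = t j -> i = j) -> (forall i, i < m -> In (t i) u) ->
  m <= length u.
Proof.
  intros t m u Hinj Hin.
  replace m with (length (map t (seq 0 m))) at 1 by (rewrite length_map, length_seq; auto).
  apply NoDup_incl_length. apply NoDup_map_seq. intros; apply Hinj; lia.
  intros y Hy. apply in_map_iff in Hy as [i [<- Hi]]. apply in_seq in Hi. apply Hin; lia.
Qed.

Fixpoint enc (b : nat) (l : list nat) : nat :=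
  match l with [] => 0 | x :: l' => x + b * enc b l' end.

Lemma dig_enc : forall b l i, 0 < b -> Forall (fun x => x < b) l -> dig (enc b l) b i = nth i l 0.
Proof.
  intros b l. induction l as [|x l IH]; intros i Hb Hl; cbn [enc].
  - unfold dig. rewrite Nat.div_0_l by (apply Nat.pow_nonzero; lia). rewrite Nat.mod_0_l by lia.
    destruct i; reflexivity.
  - inversion Hl; subst. destruct i as [|i].
    + unfold dig. rewrite Nat.pow_0_r, Nat.div_1_r. rewrite Nat.mul_comm, Nat.mod_add by lia.
      apply Nat.mod_small; auto.
    + cbn [nth]. rewrite <- IH by auto. unfold dig. f_equal. change (b ^ S i) with (b * b ^ i). rewrite <- Nat.div_div by (try apply Nat.pow_nonzero; lia).
      f_equal. rewrite Nat.add_comm, Nat.mul_comm, Nat.div_add_l by lia. rewrite Nat.div_small by auto. lia.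
Qed.

Lemma enc_lt : forall b l, 0 < b -> Forall (fun x => x < b) l -> enc b l < b ^ length l.
Proof.
  intros b l Hb. induction l as [|x l IH]; intros Hl; simpl. lia.
  inversion Hl; subst. specialize (IH H2). nia.
Qed.

Lemma rep : forall (g : nat -> nat) m, exists b T, forall i, i < m -> dig T b i = g i.
Proof.
  intros g m. set (l := map g (seq 0 m)).
  exists (S (list_max l)), (enc (S (list_max l)) l). intros i Hi.
  rewrite dig_enc by (try lia; apply Forall_forall; intros x Hx;
    pose proof (proj1 (list_max_le l (list_max l)) (le_n _)) as HF;
    rewrite Forall_forall in HF; specialize (HF x Hx); lia).
  unfold l. rewrite nth_indep with (d' := g 0) by (rewrite length_map, length_seq; auto).
  rewrite map_nth, seq_nth by auto. reflexivity.
Qed.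

Lemma bits : forall (P : nat -> Prop) L, exists c, c < 2 ^ L /\ forall k, k < L -> (dig c 2 k = 1 <-> P k).
Proof.
  intros P L.
  assert (H : exists bl, length bl = L /\ Forall (fun x => x < 2) bl /\
            forall k, k < L -> (nth k bl 0 = 1 <-> P k)).
  { induction L as [|L [bl [H1 [H2 H3]]]].
    - exists []. repeat split; auto; intros; lia.
    - destruct (classic (P L)) as [HP|HP].
      + exists (bl ++ [1]). rewrite length_app. simpl. repeat split. lia.
        apply Forall_app; split; auto.
        * intros Hk. destruct (Nat.eq_dec k L). subst; auto.
          rewrite app_nth1 in Hk by lia. apply H3; auto; lia.
        * intros Hk. destruct (Nat.eq_dec k L). subst. rewrite app_nth2 by lia. rewrite Nat.sub_diag. auto.
          rewrite app_nth1 by lia. apply H3; auto; lia.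
      + exists (bl ++ [0]). rewrite length_app. simpl. repeat split. lia.
        apply Forall_app; split; auto.
        * intros Hk. destruct (Nat.eq_dec k L). subst. rewrite app_nth2 in Hk by lia.
          rewrite Nat.sub_diag in Hk. simpl in Hk. lia.
          rewrite app_nth1 in Hk by lia. apply H3; auto; lia.
        * intros Hk. destruct (Nat.eq_dec k L). subst. tauto.
          rewrite app_nth1 by lia. apply H3; auto; lia. }
  destruct H as [bl [H1 [H2 H3]]]. exists (enc 2 bl). split.
  - rewrite <- H1. apply enc_lt; auto.
  - intros k Hk. rewrite dig_enc by auto. apply H3; auto.
Qed.

Fixpoint idx (x : nat) (l : list nat) : nat :=
  match l with [] => 0 | y :: l' => if x =? y then 0 else S (idx x l') end.

Lemma idx_spec : forall x l, In x l -> idx x l < length l /\ nth (idx x l) l 0 = x.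
Proof. intros x l. induction l as [|y l IH]; simpl; intros H. contradiction.
  destruct (x =? y) eqn:E. apply Nat.eqb_eq in E. subst. split; auto; lia.
  apply Nat.eqb_neq in E. destruct H as [H|H]. congruence. destruct (IH H). split; auto; lia. Qed.

Lemma idx_nth : forall l i, NoDup l -> i < length l -> idx (nth i l 0) l = i.
Proof. induction l as [|y l IH]; intros i Hn Hi; simpl in *. lia.
  inversion Hn; subst. destruct i as [|i]. rewrite Nat.eqb_refl; auto.
  destruct (nth i l 0 =? y) eqn:E. apply Nat.eqb_eq in E. subst. exfalso. apply H1. apply nth_In. lia.
  f_equal. apply IH; auto. lia. Qed.

Definition sumpow (X : list nat) : nat := fold_right (fun e a => 2 ^ e + a) 0 X.
Lemma sumpow_app : forall l1 l2, sumpow (l1 ++ l2) = sumpow l1 + sumpow l2.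
Proof. induction l1; intros; simpl; auto. rewrite IHl1. lia. Qed.

Lemma sumpow_lt : forall M X, NoDup X -> (forall x, In x X -> x < M) -> sumpow X < 2 ^ M.
Proof.
  induction M; intros X Hn H.
  - destruct X as [|x X]. simpl; lia. specialize (H x (or_introl eq_refl)). lia.
  - destruct (in_dec Nat.eq_dec M X) as [Hin|Hin].
    + apply in_split in Hin as [l1 [l2 ->]].
      pose proof (NoDup_remove_1 _ _ _ Hn) as Hn1. pose proof (NoDup_remove_2 _ _ _ Hn) as Hn2.
      assert (sumpow (l1 ++ l2) < 2 ^ M).
      { apply IHM; auto. intros x Hx. assert (x < S M) by (apply H; apply in_app_iff in Hx as [?|?]; apply in_app_iff; simpl; auto).
        assert (x <> M) by (intro; subst; auto). lia. }
      rewrite sumpow_app in *. simpl. simpl in H0. lia.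
    + assert (sumpow X < 2 ^ M).
      { apply IHM; auto. intros x Hx. assert (x < S M) by auto. assert (x <> M) by (intro; subst; auto). lia. }
      rewrite Nat.pow_succ_r'. lia.
Qed.

Lemma sumpow_ge : forall X x, In x X -> 2 ^ x <= sumpow X.
Proof. induction X as [|a X IH]; simpl; intros x H; [contradiction|]. destruct H as [H|H]; [subst; lia|apply IH in H; lia]. Qed.

Lemma sumpow_eq : forall M X X', NoDup X -> NoDup X' ->
  (forall x, In x X -> x < M) -> (forall x, In x X' -> x < M) ->
  sumpow X = sumpow X' -> forall x, In x X <-> In x X'.
Proof.
  induction M; intros X X' Hn Hn' H H' Hs x.
  - split; intros Hx; [apply H in Hx|apply H' in Hx]; lia.
  - destruct (in_dec Nat.eq_dec M X) as [Hin|Hin]; destruct (in_dec Nat.eq_dec M X') as [Hin'|Hin'].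
    + apply in_split in Hin as [l1 [l2 ->]]. apply in_split in Hin' as [l1' [l2' ->]].
      pose proof (NoDup_remove_1 _ _ _ Hn). pose proof (NoDup_remove_2 _ _ _ Hn).
      pose proof (NoDup_remove_1 _ _ _ Hn'). pose proof (NoDup_remove_2 _ _ _ Hn').
      assert (E : forall y, In y (l1 ++ l2) <-> In y (l1' ++ l2')).
      { apply IHM; auto.
        - intros y Hy. assert (y < S M) by (apply H; apply in_app_iff in Hy as [?|?]; apply in_app_iff; simpl; auto).
          assert (y <> M) by (intro; subst; auto). lia.
        - intros y Hy. assert (y < S M) by (apply H'; apply in_app_iff in Hy as [?|?]; apply in_app_iff; simpl; auto).
          assert (y <> M) by (intro; subst; auto). lia.
        - rewrite !sumpow_app in *. simpl in Hs. lia. }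
      rewrite !in_app_iff. simpl. specialize (E x). rewrite !in_app_iff in E. tauto.
    + exfalso. assert (2 ^ M <= sumpow X) by (apply sumpow_ge; auto).
      assert (sumpow X' < 2 ^ M); [|lia]. apply sumpow_lt; auto. intros y Hy.
      assert (y < S M) by auto. assert (y <> M) by (intro; subst; auto). lia.
    + exfalso. assert (2 ^ M <= sumpow X') by (apply sumpow_ge; auto).
      assert (sumpow X < 2 ^ M); [|lia]. apply sumpow_lt; auto. intros y Hy.
      assert (y < S M) by auto. assert (y <> M) by (intro; subst; auto). lia.
    + apply IHM; auto.
      intros y Hy. assert (y < S M) by auto. assert (y <> M) by (intro; subst; auto). lia.
      intros y Hy. assert (y < S M) by auto. assert (y <> M) by (intro; subst; auto). lia.
Qed.

Lemma off_S : forall m, off (S m) = off m + 2 ^ (m * m).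
Proof. reflexivity. Qed.

Lemma off_mono : forall m m', m <= m' -> off m <= off m'.
Proof. intros m m' H. induction H; auto. rewrite off_S. lia. Qed.

Lemma off_inj : forall m c m' c', c < 2 ^ (m * m) -> c' < 2 ^ (m' * m') ->
  off m + c = off m' + c' -> m = m' /\ c = c'.
Proof.
  intros m c m' c' Hc Hc' E.
  destruct (lt_eq_lt_dec m m') as [[Hl|Hl]|Hl].
  - exfalso. pose proof (off_mono (S m) m' Hl). rewrite off_S in H. lia.
  - subst. lia.
  - exfalso. pose proof (off_mono (S m') m Hl). rewrite off_S in H. lia.
Qed.

Lemma card_iso : forall B B' l l', iso [2] B B' -> (forall x, univ B x <-> In x l) ->
  (forall x, univ B' x <-> In x l') -> NoDup l -> NoDup l' -> length l = length l'.
Proof.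
  intros B B' l l' [f [g [H1 [H2 _]]]] Hl Hl' Hn Hn'.
  assert (forall (h k : nat -> nat) (a a' : list nat), NoDup a -> (forall x, In x a -> In (h x) a' /\ k (h x) = x) ->
            length a <= length a').
  { intros h k a a' Ha Hh. rewrite <- (length_map h). apply NoDup_incl_length.
    - clear Hl Hl' Hn Hn'. induction a as [|x a IH]; simpl; constructor.
      + intros Hin. apply in_map_iff in Hin as [y [E Hy]]. inversion Ha; subst.
        assert (k (h y) = y) by (apply Hh; simpl; auto). assert (k (h x) = x) by (apply Hh; simpl; auto).
        rewrite E in H. congruence.
      + inversion Ha; subst. apply IH; auto. intros; apply Hh; simpl; auto.
    - intros y Hy. apply in_map_iff in Hy as [x [<- Hx]]. apply Hh; auto. }
  apply Nat.le_antisymm.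
  - apply (H f g); auto. intros x Hx. apply Hl in Hx. destruct (H1 x Hx). split; auto. apply Hl'; auto.
  - apply (H g f); auto. intros x Hx. apply Hl' in Hx. destruct (H2 x Hx). split; auto. apply Hl; auto.
Qed.


Definition LA (A : structure) (l : nat) : Prop :=
  exists b T m c j, validb b T m c j = true /\ realizes A b T m c /\ l = lab m c j.
Definition BA (lo : bool) (A : structure) : structure :=
  Struct (LA A) (fun _ args => match args with [x; y] => outb lo x y = true | _ => False end).

Lemma dig01 : forall d1 d2, d1 < 2 -> d2 < 2 -> (d1 = 1 <-> d2 = 1) -> d1 = d2.
Proof. intros d1 d2 H1 H2 H. destruct (Nat.eq_dec d1 1); destruct (Nat.eq_dec d2 1); try tauto; lia. Qed.

Lemma cons_real : forall A b1 T1 m1 c1 b2 T2 m2 c2,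
  realizes A b1 T1 m1 c1 -> realizes A b2 T2 m2 c2 -> consb b1 T1 m1 c1 b2 T2 m2 c2 = true.
Proof.
  intros A b1 T1 m1 c1 b2 T2 m2 c2 R1 R2. apply consb_spec.
  intros i j i' j' Hi Hj Hi' Hj' E1 E2.
  destruct (pat_rel A b1 T1 m1 c1 i j R1 Hi Hj) as [_ [_ H1]].
  destruct (pat_rel A b2 T2 m2 c2 i' j' R2 Hi' Hj') as [_ [_ H2]].
  rewrite E1, E2 in H1. apply dig01; try apply dig2_lt. rewrite <- H1, <- H2. tauto.
Qed.

Lemma KL1 : forall lo A alpha phi, (forall psi, In psi alpha -> in_diagram [2] A psi) ->
  PhiG lo (alpha, phi) -> exists l1 l2 kind, LA A l1 /\ LA A l2 /\ phi = phil lo kind l1 l2.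
Proof.
  intros lo A alpha phi HD [b1 [T1 [m1 [c1 [j1 [b2 [T2 [m2 [c2 [j2 [kind [Hok He]]]]]]]]]]]].
  unfold elem in He. injection He as Ea Ep. unfold okb in Hok. rewrite !andb_true_iff in Hok.
  destruct Hok as [[V1 V2] _].
  exists (lab m1 c1 j1), (lab m2 c2 j2), kind. split; [|split]; auto.
  - exists b1, T1, m1, c1, j1. split; [auto|split; [|auto]]. intros ps Hp. apply HD. rewrite Ea. apply in_or_app; auto.
  - exists b2, T2, m2, c2, j2. split; [auto|split; [|auto]]. intros ps Hp. apply HD. rewrite Ea. apply in_or_app; auto.
Qed.

Lemma KL2 : forall lo A l1 l2 kind, LA A l1 -> LA A l2 ->
  exists alpha, (forall psi, In psi alpha -> in_diagram [2] A psi) /\ PhiG lo (alpha, phil lo kind l1 l2).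
Proof.
  intros lo A l1 l2 kind [b1 [T1 [m1 [c1 [j1 [V1 [R1 ->]]]]]]] [b2 [T2 [m2 [c2 [j2 [V2 [R2 ->]]]]]]].
  exists (alph b1 T1 m1 c1 ++ alph b2 T2 m2 c2). split.
  - intros psi Hp. apply in_app_or in Hp as [Hp|Hp]; auto.
  - exists b1, T1, m1, c1, j1, b2, T2, m2, c2, j2, kind. split; auto.
    unfold okb. rewrite V1, V2. simpl. eapply cons_real; eauto.
Qed.

Lemma diagBA : forall lo A phi, in_diagram [2] (BA lo A) phi <->
  exists l1 l2 kind, LA A l1 /\ LA A l2 /\ phi = phil lo kind l1 l2.
Proof.
  intros lo A [bb [x y | i args]]; unfold in_diagram; cbn [fst snd consts atom_true wf_lit wf_atom univ rel BA]; split.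
  - intros [_ [HF HT]]. inversion HF; subst. inversion H2; subst.
    exists x, y, 0. split; auto. split; auto. unfold phil. simpl. f_equal.
    destruct (x =? y) eqn:E. apply Nat.eqb_eq in E. apply HT; auto.
    apply Nat.eqb_neq in E. destruct bb; auto. exfalso. apply E. apply HT; auto.
  - intros [l1 [l2 [kind [H1 [H2 E]]]]]. unfold phil in E. destruct (kind =? 0); [|discriminate].
    injection E as -> -> ->. split; auto. split. repeat constructor; auto.
    rewrite Nat.eqb_eq. tauto.
  - intros [[Hi Hl] [HF HT]]. simpl in Hi. assert (i = 0) by lia. subst i. simpl in Hl.
    destruct args as [|x [|y [|z args]]]; simpl in Hl; try lia.
    inversion HF; subst. inversion H2; subst.
    exists x, y, 1. split; auto. split; auto. unfold phil. simpl. f_equal.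
    destruct (outb lo x y) eqn:E; destruct bb; auto; exfalso.
    assert (false = true) by (apply HT; auto). discriminate.
    assert (false = true) by (apply HT; auto). discriminate.
  - intros [l1 [l2 [kind [H1 [H2 E]]]]]. unfold phil in E. destruct (kind =? 0); [discriminate|].
    injection E as -> -> ->. split. simpl; lia. split. repeat constructor; auto. tauto.
Qed.

Lemma image_BA : forall K K' lo A, lang K = [2] -> lang K' = [2] -> image K K' (PhiG lo) A (BA lo A).
Proof.
  intros K K' lo A HK HK' phi. rewrite HK, HK', diagBA. split.
  - intros [alpha [HD HP]]. eapply KL1; eauto.
  - intros [l1 [l2 [kind [H1 [H2 ->]]]]]. apply KL2; auto.
Qed.

Lemma cond2 : forall lo alpha phi, PhiG lo (alpha, phi) ->
  (exists C, finite_structure C /\ forall psi, In psi alpha -> in_diagram [2] C psi) /\ wf_lit [2] phi.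
Proof.
  intros lo alpha phi [b1 [T1 [m1 [c1 [j1 [b2 [T2 [m2 [c2 [j2 [kind [Hok He]]]]]]]]]]]].
  unfold elem in He. injection He as Ea Ep. unfold okb in Hok. rewrite !andb_true_iff in Hok.
  destruct Hok as [[V1 V2] Hc]. apply validb_spec in V1 as [I1 _]. apply validb_spec in V2 as [I2 _].
  rewrite injb_spec in I1, I2. rewrite consb_spec in Hc.
  split.
  2:{ rewrite Ep. unfold phil. destruct (kind =? 0); cbn; [exact I | split; [lia|reflexivity]]. }
  set (t1 := fun i => dig T1 b1 i). set (t2 := fun i => dig T2 b2 i).
  exists (Struct (fun x => (exists i, i < m1 /\ x = t1 i) \/ (exists i, i < m2 /\ x = t2 i))
    (fun _ args => match args with
       | [x; y] => (exists i j, i < m1 /\ j < m1 /\ x = t1 i /\ y = t1 j /\ dig c1 2 (i*m1+j) = 1) \/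
                   (exists i j, i < m2 /\ j < m2 /\ x = t2 i /\ y = t2 j /\ dig c2 2 (i*m2+j) = 1)
       | _ => False end)).
  split.
  - exists (map t1 (seq 0 m1) ++ map t2 (seq 0 m2)). intros x. simpl. rewrite in_app_iff, !in_map_iff.
    split.
    + intros [[i [Hi ->]]|[i [Hi ->]]]; [left|right]; exists i; rewrite in_seq; split; auto; lia.
    + intros [[i [<- Hi]]|[i [<- Hi]]]; rewrite in_seq in Hi; [left|right]; exists i; split; auto; lia.
  - subst alpha. intros psi Hp. apply in_app_or in Hp as [Hp|Hp]; revert psi Hp; apply realizes_intro;
    intros i j Hi Hj; cbn [univ rel]; (split; [eauto|]).
    + split.
      * intros [[i' [j' [Hi' [Hj' [E1 [E2 Hd]]]]]]|[i' [j' [Hi' [Hj' [E1 [E2 Hd]]]]]]].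
        -- unfold t1 in E1, E2. apply I1 in E1; auto. apply I1 in E2; auto. subst; auto.
        -- transitivity (dig c2 2 (i'*m2+j')); [apply Hc; auto | exact Hd].
      * intros Hd. left. exists i, j. repeat split; auto.
    + split.
      * intros [[i' [j' [Hi' [Hj' [E1 [E2 Hd]]]]]]|[i' [j' [Hi' [Hj' [E1 [E2 Hd]]]]]]].
        -- transitivity (dig c1 2 (i'*m1+j')); [symmetry; apply Hc; auto | exact Hd].
        -- unfold t2 in E1, E2. apply I2 in E1; auto. apply I2 in E2; auto. subst; auto.
      * intros Hd. right. exists i, j. repeat split; auto.
Qed.


Definition PA (A : structure) m c := exists b T, injb b T m = true /\ c < 2 ^ (m * m) /\ realizes A b T m c.
Definition EA (A : structure) e := exists m c, PA A m c /\ e = off m + c.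

Lemma PA_le : forall A u m c, (forall x, univ A x <-> In x u) -> PA A m c -> m <= length u.
Proof.
  intros A u m c Hu [b [T [I [_ R]]]]. apply (pigeon (fun i => dig T b i)).
  - intros i j Hi Hj E. rewrite injb_spec in I. apply I; auto.
  - intros i Hi. apply Hu. destruct (pat_rel A b T m c i i R Hi Hi) as [H _]. exact H.
Qed.

Lemma EA_bound : forall A u e, (forall x, univ A x <-> In x u) -> EA A e -> e < off (S (length u)).
Proof.
  intros A u e Hu [m [c [HP ->]]]. pose proof (PA_le A u m c Hu HP).
  destruct HP as [? [? [_ [Hc _]]]]. pose proof (off_mono (S m) (S (length u))). rewrite off_S in H0. lia.
Qed.

Lemma LA_iff : forall A l, LA A l <-> exists e, EA A e /\ 2 ^ e <= l < 2 ^ e + 2 ^ e.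
Proof.
  intros A l. split.
  - intros [b [T [m [c [j [V [R ->]]]]]]]. apply validb_spec in V as [I [Hc Hj]].
    exists (off m + c). split. exists m, c. split; auto. exists b, T. auto. unfold lab. lia.
  - intros [e [[m [c [[b [T [I [Hc R]]]] ->]]] He]].
    exists b, T, m, c, (l - 2 ^ (off m + c)). split; [|split]; auto.
    apply validb_spec. repeat split; auto. lia. unfold lab. lia.
Qed.

Lemma LA_bound : forall A u l, (forall x, univ A x <-> In x u) -> LA A l -> l < 2 ^ off (S (length u)).
Proof.
  intros A u l Hu HL. apply LA_iff in HL as [e [HE He]].
  pose proof (EA_bound A u e Hu HE).
  assert (2 ^ e + 2 ^ e = 2 ^ (S e)) by (rewrite Nat.pow_succ_r'; lia).
  assert (2 ^ S e <= 2 ^ off (S (length u))) by (apply Nat.pow_le_mono_r; lia). lia.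
Qed.

Lemma BA_finite : forall lo A, finite_structure A -> finite_structure (BA lo A).
Proof.
  intros lo A [u Hu]. destruct (fin_sub (LA A) (seq 0 (2 ^ off (S (length u))))) as [v [_ Hv]].
  - intros x Hx. apply in_seq. pose proof (LA_bound A u x Hu Hx). lia.
  - exists v. exact Hv.
Qed.

Lemma iso_LA : forall A A' l, iso [2] A A' -> LA A l -> LA A' l.
Proof.
  intros A A' l [f [g [H1 [H2 H3]]]] [b [T [m [c [j [V [R ->]]]]]]].
  destruct (rep (fun i => f (dig T b i)) m) as [b' [T' HT']].
  apply validb_spec in V as [I [Hc Hj]].
  exists b', T', m, c, j. split; [|split]; auto.
  - apply validb_spec. repeat split; auto. apply injb_spec. intros i k Hi Hk E.
    rewrite !HT' in E by auto. rewrite injb_spec in I. apply I; auto.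
    destruct (pat_rel A b T m c i k R Hi Hk) as [U1 [U2 _]].
    rewrite <- (proj2 (H1 _ U1)), <- (proj2 (H1 _ U2)). congruence.
  - apply realizes_intro. intros i k Hi Hk. rewrite !HT' by auto.
    destruct (pat_rel A b T m c i k R Hi Hk) as [U1 [U2 HR]].
    split. apply H1; auto. rewrite <- HR. symmetry.
    apply (H3 0 [dig T b i; dig T b k]); simpl; auto.
Qed.

Lemma iso_sym : forall A A', iso [2] A A' -> iso [2] A' A.
Proof.
  intros A A' [f [g [H1 [H2 H3]]]]. exists g, f. split; auto. split; auto.
  intros i args Hi Hl HF.
  assert (HF' : Forall (univ A) (map g args)).
  { apply Forall_map. eapply Forall_impl; [|exact HF]. intros a Ha. apply H2; auto. }
  rewrite (H3 i (map g args) Hi); [| rewrite length_map; auto | exact HF'].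
  rewrite map_map. replace (map (fun x => f (g x)) args) with args. tauto.
  clear Hl HF'. induction HF; simpl; auto. f_equal; auto. symmetry; apply H2; auto.
Qed.

Definition sameD (B B' : structure) := forall phi, in_diagram [2] B phi <-> in_diagram [2] B' phi.

Lemma diag_eq : forall C x, in_diagram [2] C (true, AEq x x) <-> univ C x.
Proof. intros. unfold in_diagram. cbn. split.
  - intros [_ [HF _]]. inversion HF; auto.
  - intros H. split; auto. split. repeat constructor; auto. tauto. Qed.

Lemma diag_rel : forall C x y, in_diagram [2] C (true, ARel 0 [x; y]) <-> univ C x /\ univ C y /\ rel C 0 [x; y].
Proof. intros. unfold in_diagram. cbn. split.
  - intros [_ [HF HT]]. inversion HF; subst. inversion H2; subst. split; auto. split; auto. apply HT; auto.
  - intros [H1 [H2 H3]]. split. split; lia. split. repeat constructor; auto. tauto. Qed.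

Lemma sameD_iso : forall B B', sameD B B' -> iso [2] B B'.
Proof.
  intros B B' H.
  assert (HU : forall x, univ B x <-> univ B' x).
  { intros x. rewrite <- !diag_eq. apply H. }
  exists (fun x => x), (fun x => x). split; [intros x Hx; split; auto; apply HU; auto|].
  split; [intros x Hx; split; auto; apply HU; auto|].
  intros i args Hi Hl HF. simpl in Hi. assert (i = 0) by lia. subst i. simpl in Hl.
  destruct args as [|x [|y [|z args]]]; simpl in Hl; try lia. simpl.
  apply Forall_inv in HF as HFx. apply Forall_inv_tail, Forall_inv in HF as HFy.
  specialize (H (true, ARel 0 [x; y])). rewrite !diag_rel in H.
  rewrite <- (HU x), <- (HU y) in H. tauto.
Qed.


Lemma interval_uniq : forall e e' x, 2 ^ e <= x < 2 ^ e + 2 ^ e -> 2 ^ e' <= x < 2 ^ e' + 2 ^ e' -> e = e'.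
Proof.
  intros e e' x H1 H2. destruct (lt_eq_lt_dec e e') as [[H|H]|H]; auto; exfalso.
  - assert (2 ^ S e <= 2 ^ e') by (apply Nat.pow_le_mono_r; lia). rewrite Nat.pow_succ_r' in H0. lia.
  - assert (2 ^ S e' <= 2 ^ e) by (apply Nat.pow_le_mono_r; lia). rewrite Nat.pow_succ_r' in H0. lia.
Qed.

Definition iv (e : nat) := seq (2 ^ e) (2 ^ e).

Lemma flat_nodup : forall El, NoDup El -> NoDup (flat_map iv El).
Proof.
  induction El as [|e El IH]; intros Hn; simpl. constructor.
  inversion Hn; subst. apply NoDup_app. apply seq_NoDup. auto.
  intros x Hx Hx'. apply in_flat_map in Hx' as [e' [He' Hx']]. unfold iv in *. rewrite in_seq in Hx, Hx'.
  assert (e = e') by (apply (interval_uniq e e' x); lia). subst; auto.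
Qed.

Lemma flat_len : forall El, length (flat_map iv El) = sumpow El.
Proof. induction El; simpl; auto. rewrite length_app, IHEl. unfold iv. rewrite length_seq. auto. Qed.

Lemma LA_list : forall A u, (forall x, univ A x <-> In x u) ->
  exists El, NoDup El /\ (forall e, EA A e <-> In e El) /\ (forall x, LA A x <-> In x (flat_map iv El)).
Proof.
  intros A u Hu. destruct (fin_sub (EA A) (seq 0 (off (S (length u))))) as [El [Hn HE]].
  - intros e He. apply in_seq. pose proof (EA_bound A u e Hu He). lia.
  - exists El. split; auto. split; auto. intros x. rewrite LA_iff, in_flat_map. unfold iv.
    split; intros [e [H1 H2]]; exists e; rewrite HE, in_seq in *; split; auto; lia.
Qed.

Lemma nth_map_seq : forall (h : nat -> nat) n i, i < n -> nth i (map h (seq 0 n)) 0 = h i.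
Proof. intros. rewrite nth_indep with (d' := h 0) by (rewrite length_map, length_seq; auto).
  rewrite map_nth, seq_nth by auto. reflexivity. Qed.

Lemma enum : forall A u, NoDup u -> (forall x, univ A x <-> In x u) ->
  exists b T c, injb b T (length u) = true /\ c < 2 ^ (length u * length u) /\
    realizes A b T (length u) c /\ forall i, i < length u -> dig T b i = nth i u 0.
Proof.
  intros A u Hn Hu. set (n := length u).
  destruct (rep (fun i => nth i u 0) n) as [b [T HT]].
  destruct (bits (fun k => rel A 0 [nth (k / n) u 0; nth (k mod n) u 0]) (n * n)) as [c [Hc Hb]].
  exists b, T, c. split; [|split; [auto|split]]; auto.
  - apply injb_spec. intros i j Hi Hj E. rewrite !HT in E by auto.
    eapply NoDup_nth; eauto.
  - apply realizes_intro. intros i j Hi Hj. rewrite !HT by auto. split.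
    + apply Hu. apply nth_In. auto.
    + rewrite Hb by nia. destruct (divmod_ij n i j Hj) as [E1 E2]. rewrite E1, E2. tauto.
Qed.

Lemma fiso : forall A A' u u', NoDup u -> NoDup u' ->
  (forall x, univ A x <-> In x u) -> (forall x, univ A' x <-> In x u') ->
  (forall m c, PA A m c <-> PA A' m c) -> iso [2] A A'.
Proof.
  intros A A' u u' Hn Hn' Hu Hu' HP.
  set (n := length u).
  destruct (enum A u Hn Hu) as [b [T [c [I [Hc [R HT]]]]]].
  assert (HPA : PA A n c) by (exists b, T; auto).
  apply HP in HPA as [b' [T' [I' [_ R']]]].
  destruct (enum A' u' Hn' Hu') as [b2 [T2 [c2 [I2 [Hc2 [R2 _]]]]]].
  assert (Hle1 : length u' <= n).
  { apply (PA_le A u (length u') c2 Hu). apply HP. exists b2, T2; auto. }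
  assert (Hle2 : n <= length u').
  { apply (PA_le A' u' n c Hu'). exists b', T'; auto. }
  set (l' := map (fun i => dig T' b' i) (seq 0 n)).
  assert (Hl'n : length l' = n) by (unfold l'; rewrite length_map, length_seq; auto).
  assert (Hnl' : NoDup l').
  { apply NoDup_map_seq. intros i j Hi Hj E. rewrite injb_spec in I'. apply I'; auto; lia. }
  assert (Hnth' : forall i, i < n -> nth i l' 0 = dig T' b' i) by (intros; apply nth_map_seq; auto).
  assert (Hinc : incl u' l').
  { apply NoDup_length_incl; auto. lia. intros y Hy. unfold l' in Hy. apply in_map_iff in Hy as [i [<- Hi]].
    apply in_seq in Hi. apply Hu'. destruct (pat_rel A' b' T' n c i i R' ltac:(lia) ltac:(lia)) as [U _]. auto. }
  exists (fun x => dig T' b' (idx x u)), (fun y => nth (idx y l') u 0).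
  split; [|split].
  - intros x Hx. apply Hu in Hx. destruct (idx_spec x u Hx) as [Hi Hx'].
    set (i := idx x u) in *. split.
    + destruct (pat_rel A' b' T' n c i i R' Hi Hi) as [U _]. auto.
    + rewrite <- Hnth' by auto. rewrite idx_nth by (auto; lia). auto.
  - intros y Hy. apply Hu', Hinc in Hy. destruct (idx_spec y l' Hy) as [Hi Hy'].
    set (i := idx y l') in *. rewrite Hl'n in Hi. split.
    + apply Hu. apply nth_In. auto.
    + rewrite idx_nth by auto. rewrite <- Hnth' by auto. auto.
  - intros i0 args Hi0 Hl HF. simpl in Hi0. assert (i0 = 0) by lia. subst i0. simpl in Hl.
    destruct args as [|x [|y [|z args]]]; simpl in Hl; try lia. cbn [map].
    apply Forall_inv in HF as HFx. apply Forall_inv_tail, Forall_inv in HF as HFy.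
    apply Hu in HFx, HFy. destruct (idx_spec x u HFx) as [Hi Hx]. destruct (idx_spec y u HFy) as [Hj Hy].
    set (i := idx x u) in *. set (j := idx y u) in *.
    destruct (pat_rel A b T n c i j R Hi Hj) as [_ [_ H1]].
    destruct (pat_rel A' b' T' n c i j R' Hi Hj) as [_ [_ H2]].
    rewrite !HT in H1 by auto. rewrite Hx, Hy in H1. rewrite H1, H2. tauto.
Qed.


Lemma sameD_BA : forall lo A A', (forall l, LA A l <-> LA A' l) -> sameD (BA lo A) (BA lo A').
Proof.
  intros lo A A' H phi. rewrite !diagBA. split; intros [l1 [l2 [k [H1 [H2 E]]]]];
  exists l1, l2, k; repeat split; auto; apply H; auto.
Qed.

Lemma finite_nodup : forall A, finite_structure A -> exists u, NoDup u /\ forall x, univ A x <-> In x u.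
Proof.
  intros A [u Hu]. exists (nodup Nat.eq_dec u). split. apply NoDup_nodup.
  intros x. rewrite nodup_In. apply Hu.
Qed.

Lemma in_le_max : forall l x, In x l -> x <= list_max l.
Proof. intros l x H. pose proof (proj1 (list_max_le l (list_max l)) (le_n _)) as HF.
  rewrite Forall_forall in HF. auto. Qed.

Theorem le_gen : forall K K' lo, lang K = [2] -> lang K' = [2] ->
  (forall A, mem K A -> finite_structure A) -> (forall A, mem K A -> mem K' (BA lo A)) -> le_c K K'.
Proof.
  intros K K' lo HK HK' Hfin Hmem. exists (PhiG lo). split; [split; [|split]|].
  - apply ce_PhiG.
  - intros alpha phi HP. rewrite HK, HK'. eapply cond2; eauto.
  - intros A HA. exists (BA lo A). split; auto. apply image_BA; auto.
  - intros A A' B B' HA HA' HB HB'.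
    assert (SB : sameD B (BA lo A)).
    { intros phi. pose proof (HB phi) as E1. pose proof (image_BA K K' lo A HK HK' phi) as E2.
      rewrite HK' in E1, E2. rewrite <- E1, <- E2. tauto. }
    assert (SB' : sameD B' (BA lo A')).
    { intros phi. pose proof (HB' phi) as E1. pose proof (image_BA K K' lo A' HK HK' phi) as E2.
      rewrite HK' in E1, E2. rewrite <- E1, <- E2. tauto. }
    rewrite HK, HK'. split.
    + intros Hiso. apply sameD_iso. intros phi. rewrite (SB phi), (SB' phi).
      apply sameD_BA. intros l. split; apply iso_LA; auto. apply iso_sym; auto.
    + intros Hiso.
      destruct (finite_nodup A (Hfin A HA)) as [u [Hn Hu]].
      destruct (finite_nodup A' (Hfin A' HA')) as [u' [Hn' Hu']].
      destruct (LA_list A u Hu) as [El [HnE [HE HL]]].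
      destruct (LA_list A' u' Hu') as [El' [HnE' [HE' HL']]].
      assert (UB : forall x, univ B x <-> In x (flat_map iv El)).
      { intros x. rewrite <- diag_eq, (SB _), diag_eq. apply HL. }
      assert (UB' : forall x, univ B' x <-> In x (flat_map iv El')).
      { intros x. rewrite <- diag_eq, (SB' _), diag_eq. apply HL'. }
      pose proof (card_iso B B' _ _ Hiso UB UB' (flat_nodup El HnE) (flat_nodup El' HnE')) as Hc.
      rewrite !flat_len in Hc.
      assert (HEE : forall e, In e El <-> In e El').
      { apply (sumpow_eq (S (list_max (El ++ El')))); auto.
        - intros x Hx. assert (x <= list_max (El ++ El')); [|lia].
          apply in_le_max. apply in_or_app; auto.
        - intros x Hx. assert (x <= list_max (El ++ El')); [|lia].
          apply in_le_max. apply in_or_app; auto. }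
      apply (fiso A A' u u'); auto.
      assert (G : forall X Y EX EY, (forall e, EA X e <-> In e EX) -> (forall e, EA Y e <-> In e EY) ->
                (forall e, In e EX -> In e EY) -> forall m c, PA X m c -> PA Y m c).
      { intros X Y EX EY HX HY HXY m c HPm.
        assert (EA Y (off m + c)) by (apply HY, HXY, HX; exists m, c; auto).
        destruct H as [m' [c' [HP' E]]].
        destruct HPm as [? [? [_ [Hc1 _]]]]. destruct HP' as [? [? [? [Hc2 ?]]]] eqn:?.
        destruct (off_inj m c m' c' Hc1 Hc2 E) as [-> ->]. exists x1, x2. auto. }
      intros m c. split.
      * apply (G A A' El El'); auto. intros e; apply HEE.
      * apply (G A' A El' El); auto. intros e; apply HEE.
Qed.


Theorem theorem2p5 : equiv_c FUG FLO.
Proof.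
  split.
  - apply (le_gen FUG FLO true); auto.
    + intros A [H _]; auto.
    + intros A [Hf _]. simpl. split; [apply BA_finite; auto|].
      cbn [BA rel outb]. repeat split.
      * intros x _. apply Nat.leb_le; auto.
      * intros x y _ _ H1 H2. apply Nat.leb_le in H1, H2. lia.
      * intros x y z _ _ _ H1 H2. apply Nat.leb_le in H1, H2. apply Nat.leb_le. lia.
      * intros x y _ _. destruct (Nat.le_ge_cases x y); [left|right]; apply Nat.leb_le; auto.
  - apply (le_gen FLO FUG false); auto.
    + intros A [H _]; auto.
    + intros A [Hf _]. simpl. split; [apply BA_finite; auto|].
      cbn [BA rel outb]. split; intros; discriminate.
Qed.
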